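(* In the multi-colored system with $n\ge2$, let $\mathbf a_0\in(0,\infty)^n$ with $\rho_0=a_0^1+\dots+a_0^n$ in the interior of the domain of $\varphi$. Then the Frame condition (FC) holds at $\mathbf a_0$ (equivalently: $\Gamma_{ij}(\mathbf a_0)=0$ for $i\ne j$ and $\tilde g_i(\mathbf a_0)\Gamma_{jj}(\mathbf a_0)=\tilde g_j(\mathbf a_0)\Gamma_{ii}(\mathbf a_0)$ for all $i\ne j$) if and only if $\varphi'(\rho_0)=\varphi(\rho_0)/\rho_0$, which in turn is equivalent to $\sigma^2(\rho_0)=\rho_0$, where $\sigma^2(\rho)$ is the variance of $\nu_\rho$.
   Context: Multi-colored zero-range system: given a single-species rate $g:\mathbb Z_+\to[0,\infty)$ with $g(k)=0\iff k=0$, define $g_i(\mathbf k)=g(|\mathbf k|)k^i/|\mathbf k|$ for $\mathbf k\in\mathbb Z_+^n$, $|\mathbf k|=\sum_ik^i$. For the single-species system, $\nu_\rho(k)=Z_{\varphi}^{-1}\varphi^k/g(k)!$ with $g(k)!=g(1)\cdots g(k)$, $Z_\varphi=\sum_k\varphi^k/g(k)!$, and $\varphi=\varphi(\rho)$ the fugacity chosen so that $\nu_\rho$ has mean $\rho$. The multi-colored invariant law of density $\mathbf a$ is $\nu_{\mathbf a}(\mathbf k)=\nu_\rho(|\mathbf k|)\frac{|\mathbf k|!}{k^1!\cdots k^n!}\prod_i(a^i/\rho)^{k^i}$, $\rho=\sum_ia^i$. $\tilde g_i(\mathbf a)=E_{\nu_{\mathbf a}}[g_i]$; $\Gamma(\mathbf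 a)$ is the covariance matrix of $\mathbf k$ under $\nu_{\mathbf a}$. Frame condition (FC) at $\mathbf a_0$: there is $\lambda$ with $\partial_{a^i}\tilde g_i(\mathbf a_0)=\lambda$ for all $i$ and $\partial_{a^j}\tilde g_i(\mathbf a_0)=0$ for $i\ne j$. *)

(* Defs.v *)
From Stdlib Require Import Reals Lra Lia Arith List ClassicalEpsilon.
Open Scope R_scope.

(** Value of a real series: the sum if it converges, an arbitrary real otherwise. *)
Definition ex_series (u : nat -> R) : Prop := exists l, infinite_sum u l.
Definition Series (u : nat -> R) : R :=
  epsilon (inhabits 0) (fun l => infinite_sum u l).

Fixpoint gfact (g : nat -> R) (k : nat) : R :=
  match k with O => 1 | S k' => gfact g k' * g (S k') end.

Definition Zterm (g : nat -> R) (phi : R) (k : nat) : R := phi ^ k / gfact g k.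
Definition Z (g : nat -> R) (phi : R) : R := Series (Zterm g phi).
Definition M1 (g : nat -> R) (phi : R) : R :=
  Series (fun k => INR k * Zterm g phi k).

(** fugacities for which nu is a probability law with finite mean *)
Definition admissible (g : nat -> R) (phi : R) : Prop :=
  0 <= phi /\ ex_series (Zterm g phi) /\ ex_series (fun k => INR k * Zterm g phi k).

Definition dens (g : nat -> R) (phi : R) : R := M1 g phi / Z g phi.

(** the domain of rho |-> phi(rho) *)
Definition in_dom (g : nat -> R) (rho : R) : Prop :=
  exists phi, admissible g phi /\ dens g phi = rho.

Definition interior_dom (g : nat -> R) (rho : R) : Prop :=
  exists eps, 0 < eps /\ forall r, Rabs (r - rho) < eps -> in_dom g r.

Definition phi_of (g : nat -> R) (rho : R) : R :=
  epsilon (inhabits 0) (fun phi => admissible g phi /\ dens g phi = rho).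

Definition nu (g : nat -> R) (rho : R) (m : nat) : R :=
  Zterm g (phi_of g rho) m / Z g (phi_of g rho).

Definition sigma2 (g : nat -> R) (rho : R) : R :=
  Series (fun m => INR m ^ 2 * nu g rho m) - (Series (fun m => INR m * nu g rho m)) ^ 2.

(** colours are indexed 0..n-1; a density vector is a : nat -> R (entries i<n);
    a configuration k in Z_+^n is a list of length n, k^i = nth i k 0. *)
Fixpoint lsum (l : list nat) : nat :=
  match l with nil => O | x :: t => (x + lsum t)%nat end.

Fixpoint vsum (a : nat -> R) (n : nat) : R :=
  match n with O => 0 | S n' => vsum a n' + a n' end.

(** sum of F k over all k in Z_+^n with |k| = m *)
Fixpoint comp_sum (n m : nat) (F : list nat -> R) : R :=
  match n with
  | O => if Nat.eqb m 0 then F nil else 0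
  | S n' => sum_f_R0 (fun j => comp_sum n' (m - j) (fun l => F (j :: l))) m
  end.

Fixpoint wprod (p : nat -> R) (k : list nat) (off : nat) : R :=
  match k with
  | nil => 1
  | x :: t => p off ^ x / INR (fact x) * wprod p t (S off)
  end.

Definition nu_a (g : nat -> R) (n : nat) (a : nat -> R) (k : list nat) : R :=
  let rho := vsum a n in
  nu g rho (lsum k) * INR (fact (lsum k)) * wprod (fun i => a i / rho) k 0.

(** expectation under nu_a (sum over Z_+^n, grouped by |k|) *)
Definition Ea (g : nat -> R) (n : nat) (a : nat -> R) (f : list nat -> R) : R :=
  Series (fun m => comp_sum n m (fun k => f k * nu_a g n a k)).

Definition coord (k : list nat) (i : nat) : R := INR (nth i k O).

Definition g_i (g : nat -> R) (i : nat) (k : list nat) : R :=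
  if Nat.eqb (lsum k) 0 then 0 else g (lsum k) * coord k i / INR (lsum k).

Definition gtilde (g : nat -> R) (n i : nat) (a : nat -> R) : R :=
  Ea g n a (g_i g i).

Definition Gamma (g : nat -> R) (n : nat) (a : nat -> R) (i j : nat) : R :=
  Ea g n a (fun k => coord k i * coord k j)
  - Ea g n a (fun k => coord k i) * Ea g n a (fun k => coord k j).

Definition upd (a : nat -> R) (j : nat) (t : R) : nat -> R :=
  fun i => if Nat.eqb i j then t else a i.

Definition has_partial (F : (nat -> R) -> R) (a : nat -> R) (j : nat) (L : R) : Prop :=
  derivable_pt_lim (fun t => F (upd a j t)) (a j) L.

Definition FC (g : nat -> R) (n : nat) (a0 : nat -> R) : Prop :=
  exists lam : R,
    (forall i, (i < n)%nat -> has_partial (gtilde g n i) a0 i lam) /\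
    (forall i j, (i < n)%nat -> (j < n)%nat -> i <> j ->
       has_partial (gtilde g n i) a0 j 0).

(* Main.v *)
Require Import Defs.
From Coquelicot Require Import Coquelicot.
From Stdlib Require Import Reals Lra Lia Arith List ClassicalEpsilon.
Require Import Defs.
Open Scope R_scope.

Lemma wprod_cons p x t off : wprod p (x :: t) off = p off ^ x / INR (fact x) * wprod p t (S off).
Proof. reflexivity. Qed.
Lemma coord_cons0 x t : coord (x :: t) 0 = INR x.
Proof. reflexivity. Qed.
Lemma coord_consS x t i : coord (x :: t) (S i) = coord t i.
Proof. reflexivity. Qed.


Lemma comp_sum_ext_sum n : forall m F F',
  (forall k, lsum k = m -> F k = F' k) -> comp_sum n m F = comp_sum n m F'.
Proof.
  induction n as [|n IH]; intros m F F' H; simpl.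
  - destruct (Nat.eqb_spec m 0); [subst; apply H; reflexivity|reflexivity].
  - apply sum_eq; intros j Hj. apply IH. intros k Hk. apply H. simpl. lia.
Qed.

Lemma comp_sum_ext n m F F' : (forall k, F k = F' k) -> comp_sum n m F = comp_sum n m F'.
Proof. intros H; apply comp_sum_ext_sum; auto. Qed.

Lemma comp_sum_scal n : forall m c F,
  comp_sum n m (fun k => c * F k) = c * comp_sum n m F.
Proof.
  induction n as [|n IH]; intros m c F; simpl.
  - destruct (Nat.eqb m 0); ring.
  - rewrite scal_sum. apply sum_eq; intros j Hj. rewrite IH. ring.
Qed.

Lemma comp_sum_plus n : forall m F G,
  comp_sum n m (fun k => F k + G k) = comp_sum n m F + comp_sum n m G.
Proof.
  induction n as [|n IH]; intros m F G; simpl.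
  - destruct (Nat.eqb m 0); ring.
  - rewrite <- plus_sum. apply sum_eq; intros j Hj. apply IH.
Qed.

Lemma comp_sum_0 n : forall F, comp_sum n 0 F = F (repeat 0%nat n).
Proof.
  induction n as [|n IH]; intros F; simpl; auto.
Qed.

Lemma coord_repeat0 n i : coord (repeat 0%nat n) i = 0.
Proof.
  unfold coord. revert i; induction n; intros [|i]; simpl; auto.
Qed.

Lemma vsum_shift f n : vsum f (S n) = f 0%nat + vsum (fun i => f (S i)) n.
Proof.
  induction n as [|n IH]; simpl in *; [ring|]. rewrite IH. ring.
Qed.

Lemma vsum_ext f f' n : (forall i, f i = f' i) -> vsum f n = vsum f' n.
Proof. intros H; induction n; simpl; auto. rewrite IHn, H; auto. Qed.

Lemma fact_pos_R k : 0 < INR (fact k).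
Proof. apply lt_0_INR, lt_O_fact. Qed.

Lemma L0 n : forall m p off,
  comp_sum n m (fun k => wprod p k off) = (vsum (fun i => p (off + i)%nat) n) ^ m / INR (fact m).
Proof.
  induction n as [|n IH]; intros m p off.
  - simpl. destruct m; simpl; [field|]. unfold Rdiv; ring.
  - rewrite vsum_shift. simpl comp_sum.
    rewrite (Nat.add_0_r off).
    rewrite binomial. unfold Rdiv. rewrite Rmult_comm, scal_sum.
    apply sum_eq; intros j Hj. idtac.
    rewrite (comp_sum_scal n (m-j) (p off ^ j * / INR (fact j))).
    rewrite IH.
    replace (vsum (fun i => p (S off + i)%nat) n) with (vsum (fun i => p (off + S i)%nat) n).
    2:{ apply vsum_ext; intros; f_equal; lia. }
    unfold C. pose proof (fact_pos_R j). pose proof (fact_pos_R (m-j)). pose proof (fact_pos_R m).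
    field; lra.
Qed.

Lemma comp_sum_S n m F : comp_sum (S n) m F = sum_f_R0 (fun j => comp_sum n (m-j) (fun l => F (j::l))) m.
Proof. reflexivity. Qed.

Fixpoint incr (k : list nat) (i : nat) : list nat :=
  match k with
  | nil => nil
  | x :: t => match i with O => S x :: t | S i' => x :: incr t i' end
  end.

Lemma SHIFT p n : forall i off m G, (i < n)%nat ->
  comp_sum n (S m) (fun k => coord k i * wprod p k off * G k)
  = p (off + i)%nat * comp_sum n m (fun k => wprod p k off * G (incr k i)).
Proof.
  induction n as [|n IH]; intros i off m G Hi; [lia|].
  rewrite !comp_sum_S. destruct i as [|i].
  - rewrite (decomp_sum _ (S m)) by lia. simpl pred.
    rewrite (comp_sum_ext n (S m - 0) _ (fun l => 0 * (wprod p l (S off) * G (0%nat :: l)))).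
    2:{ intros l. rewrite ?coord_cons0, ?coord_consS. rewrite wprod_cons. simpl INR. ring. }
    rewrite comp_sum_scal, Rmult_0_l, Rplus_0_l.
    rewrite scal_sum. apply sum_eq; intros j Hj.
    transitivity ((INR (S j) * (p off ^ S j / INR (fact (S j)))) * comp_sum n (m - j) (fun l => wprod p l (S off) * G (S j :: l))).
    { rewrite <- comp_sum_scal. apply comp_sum_ext. intros l. rewrite coord_cons0, wprod_cons. ring. }
    transitivity (((p off ^ j / INR (fact j)) * comp_sum n (m - j) (fun l => wprod p l (S off) * G (S j :: l))) * p (off + 0)%nat).
    2:{ f_equal. rewrite <- comp_sum_scal. apply comp_sum_ext. intros l. rewrite wprod_cons. simpl incr. ring. }
    rewrite Nat.add_0_r.
    replace (fact (S j)) with (S j * fact j)%nat by reflexivity.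
    rewrite mult_INR. pose proof (fact_pos_R j). pose proof (lt_0_INR (S j) ltac:(lia)).
    simpl pow. field. lra.
  - rewrite (tech5 _ m).
    rewrite (Nat.sub_diag (S m)), comp_sum_0, coord_consS, coord_repeat0.
    rewrite Rmult_0_l, Rmult_0_l, Rplus_0_r.
    rewrite scal_sum. apply sum_eq; intros j Hj.
    replace (S m - j)%nat with (S (m - j)) by lia.
    transitivity (comp_sum n (S (m - j)) (fun l => coord l i * wprod p l (S off) * ((p off ^ j / INR (fact j)) * G (j :: l)))).
    { apply comp_sum_ext. intros l. rewrite coord_consS, wprod_cons. ring. }
    rewrite IH by lia.
    transitivity (((p off ^ j / INR (fact j)) * comp_sum n (m - j) (fun l => wprod p l (S off) * G (j :: incr l i))) * p (off + S i)%nat).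
    2:{ f_equal. rewrite <- comp_sum_scal. apply comp_sum_ext. intros l. rewrite wprod_cons. simpl incr. ring. }
    replace (S off + i)%nat with (off + S i)%nat by lia.
    assert (E: comp_sum n (m-j) (fun k => wprod p k (S off) * ((p off ^ j / INR (fact j)) * G (j::incr k i))) = (p off ^ j / INR (fact j)) * comp_sum n (m-j) (fun l => wprod p l (S off) * G (j::incr l i))).
    { rewrite <- comp_sum_scal. apply comp_sum_ext; intros; ring. }
    rewrite E; ring.
Qed.

Lemma comp_sum_ext_len n : forall m F F',
  (forall k, length k = n -> F k = F' k) -> comp_sum n m F = comp_sum n m F'.
Proof.
  induction n as [|n IH]; intros m F F' H; simpl.
  - destruct (Nat.eqb_spec m 0); [apply H; reflexivity|reflexivity].
  - apply sum_eq; intros j Hj. apply IH. intros k Hk. apply H. simpl. lia.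
Qed.

Lemma coord_incr k : forall i j, (i < length k)%nat ->
  coord (incr k i) j = coord k j + (if Nat.eqb i j then 1 else 0).
Proof.
  induction k as [|x t IH]; intros i j Hi; simpl in Hi; [lia|].
  destruct i as [|i]; destruct j as [|j]; simpl incr.
  - rewrite !coord_cons0, S_INR. simpl. ring.
  - rewrite !coord_consS. simpl. ring.
  - rewrite !coord_cons0. simpl. ring.
  - rewrite !coord_consS. rewrite IH by lia. reflexivity.
Qed.

Lemma W0 p n m : vsum p n = 1 -> comp_sum n m (fun k => wprod p k 0) = / INR (fact m).
Proof.
  intros H. rewrite L0. rewrite (vsum_ext _ p) by reflexivity. rewrite H, pow1. unfold Rdiv; ring.
Qed.

Lemma W1 p n m i : vsum p n = 1 -> (i < n)%nat ->
  comp_sum n m (fun k => coord k i * wprod p k 0) = INR m * p i / INR (fact m).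
Proof.
  intros H Hi. destruct m as [|m].
  - rewrite comp_sum_0, coord_repeat0. simpl. field.
  - rewrite (comp_sum_ext n (S m) _ (fun k => coord k i * wprod p k 0 * (fun _ => 1) k)) by (intros; simpl; ring).
    rewrite SHIFT by auto. rewrite (comp_sum_ext n m _ (fun k => wprod p k 0)) by (intros; ring).
    rewrite W0 by auto. simpl (0 + i)%nat.
    replace (fact (S m)) with (S m * fact m)%nat by reflexivity.
    rewrite mult_INR. pose proof (fact_pos_R m). pose proof (lt_0_INR (S m) ltac:(lia)).
    field; lra.
Qed.

Lemma W2 p n m i j : vsum p n = 1 -> (i < n)%nat -> (j < n)%nat ->
  comp_sum n m (fun k => coord k i * coord k j * wprod p k 0) =
  INR m * (INR m - 1) * p i * p j / INR (fact m) + (if Nat.eqb i j then INR m * p i / INR (fact m) else 0).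
Proof.
  intros H Hi Hj. destruct m as [|m].
  - rewrite comp_sum_0, !coord_repeat0. simpl. destruct (Nat.eqb i j); field.
  - rewrite (comp_sum_ext n (S m) _ (fun k => coord k i * wprod p k 0 * (fun k => coord k j) k)) by (intros; simpl; ring).
    rewrite SHIFT by auto. simpl (0 + i)%nat.
    rewrite (comp_sum_ext_len n m _ (fun k => coord k j * wprod p k 0 + (if Nat.eqb i j then 1 else 0) * wprod p k 0)).
    2:{ intros k Hk. rewrite coord_incr by lia. ring. }
    rewrite comp_sum_plus, comp_sum_scal, W1, W0 by auto.
    replace (fact (S m)) with (S m * fact m)%nat by reflexivity.
    rewrite mult_INR, S_INR. pose proof (fact_pos_R m). pose proof (pos_INR m).
    destruct (Nat.eqb_spec i j); [subst|]; field; lra.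
Qed.

Lemma vsum_scal a n c : vsum (fun i => a i * c) n = vsum a n * c.
Proof. induction n; simpl; [ring|rewrite IHn; ring]. Qed.

Lemma vsum_p a n : vsum a n <> 0 -> vsum (fun i => a i / vsum a n) n = 1.
Proof. intros H. unfold Rdiv. rewrite vsum_scal. field; auto. Qed.

Lemma nu_a_eq g n a k m : lsum k = m ->
  nu_a g n a k = nu g (vsum a n) m * INR (fact m) * wprod (fun i => a i / vsum a n) k 0.
Proof. intros H; subst; reflexivity. Qed.

Lemma lsum_repeat0 n : lsum (repeat 0%nat n) = 0%nat.
Proof. induction n; simpl; auto. Qed.

Lemma T_g g (hg0 : g O = 0) n a i m : vsum a n <> 0 -> (i < n)%nat ->
  comp_sum n m (fun k => g_i g i k * nu_a g n a k)
  = a i / vsum a n * (g m * nu g (vsum a n) m).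
Proof.
  intros Hr Hi. destruct m as [|m].
  - rewrite comp_sum_0. unfold g_i. rewrite lsum_repeat0. simpl Nat.eqb. rewrite hg0. ring.
  - rewrite (comp_sum_ext_sum n (S m) _ (fun k => (g (S m) / INR (S m) * nu g (vsum a n) (S m) * INR (fact (S m))) * (coord k i * wprod (fun i => a i / vsum a n) k 0))).
    2:{ intros k Hk. rewrite (nu_a_eq _ _ _ _ _ Hk). unfold g_i. rewrite Hk. simpl Nat.eqb.
        pose proof (lt_0_INR (S m) ltac:(lia)). cbv iota. field. lra. }
    rewrite comp_sum_scal, W1 by (auto using vsum_p).
    pose proof (fact_pos_R (S m)). pose proof (lt_0_INR (S m) ltac:(lia)). field. lra.
Qed.

Lemma T_1 g n a i m : vsum a n <> 0 -> (i < n)%nat ->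
  comp_sum n m (fun k => coord k i * nu_a g n a k)
  = a i / vsum a n * (INR m * nu g (vsum a n) m).
Proof.
  intros Hr Hi.
  rewrite (comp_sum_ext_sum n m _ (fun k => (nu g (vsum a n) m * INR (fact m)) * (coord k i * wprod (fun i => a i / vsum a n) k 0))).
  2:{ intros k Hk. rewrite (nu_a_eq _ _ _ _ _ Hk). ring. }
  rewrite comp_sum_scal, W1 by (auto using vsum_p).
  pose proof (fact_pos_R m). field. lra.
Qed.

Lemma T_2 g n a i j m : vsum a n <> 0 -> (i < n)%nat -> (j < n)%nat ->
  comp_sum n m (fun k => coord k i * coord k j * nu_a g n a k)
  = a i / vsum a n * (a j / vsum a n) * (INR m * (INR m - 1) * nu g (vsum a n) m)
    + (if Nat.eqb i j then a i / vsum a n * (INR m * nu g (vsum a n) m) else 0).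
Proof.
  intros Hr Hi Hj.
  rewrite (comp_sum_ext_sum n m _ (fun k => (nu g (vsum a n) m * INR (fact m)) * (coord k i * coord k j * wprod (fun i => a i / vsum a n) k 0))).
  2:{ intros k Hk. rewrite (nu_a_eq _ _ _ _ _ Hk). ring. }
  rewrite comp_sum_scal, W2 by (auto using vsum_p).
  pose proof (fact_pos_R m). destruct (Nat.eqb i j); field; lra.
Qed.

Definition cc (g : nat -> R) (k : nat) : R := / gfact g k.
Definition PSm (a : nat -> R) (k : nat) : R := INR k * a k.
Definition Zf g x := PSeries (cc g) x.
Definition M1f g x := PSeries (PSm (cc g)) x.
Definition M2f g x := PSeries (PSm (PSm (cc g))) x.
Definition Df g x := M1f g x / Zf g x.
Definition Dd g x := (PSeries (PS_derive (PSm (cc g))) x * Zf g x - PSeries (PS_derive (cc g)) x * M1f g x) / (Zf g x)².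

Lemma gfact_pos g (hgpos : forall k, (0 < k)%nat -> 0 < g k) k : 0 < gfact g k.
Proof.
  induction k; simpl; [lra|]. apply Rmult_lt_0_compat; auto. apply hgpos; lia.
Qed.

Lemma cc_pos g (hgpos : forall k, (0 < k)%nat -> 0 < g k) k : 0 < cc g k.
Proof. unfold cc. apply Rinv_0_lt_compat, gfact_pos; auto. Qed.

Lemma cc_0 g : cc g 0 = 1.
Proof. unfold cc; simpl; apply Rinv_1. Qed.

Lemma Series_eq u l : infinite_sum u l -> Defs.Series u = l.
Proof.
  intros H. unfold Defs.Series.
  pose proof (epsilon_spec (inhabits 0) (fun l => infinite_sum u l) (ex_intro _ l H)) as H'.
  eapply uniqueness_sum; eauto.
Qed.

Lemma inf_sum_ext u v l : (forall k, u k = v k) -> infinite_sum u l -> infinite_sum v l.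
Proof.
  intros E H eps Heps. destruct (H eps Heps) as [N HN]. exists N. intros k Hk.
  rewrite <- (sum_eq u v) by auto. apply HN; auto.
Qed.

Lemma ps_sum a x : ex_pseries a x -> infinite_sum (fun n => a n * x ^ n) (PSeries a x).
Proof. intros H. apply is_pseries_Reals, PSeries_correct, H. Qed.

Lemma ps_ex a x l : infinite_sum (fun n => a n * x ^ n) l -> ex_pseries a x.
Proof. intros H. exists l. apply is_pseries_Reals, H. Qed.

Lemma PSeries_PSm a x : PSeries (PSm a) x = x * PSeries (PS_derive a) x.
Proof.
  rewrite <- PSeries_incr_1. apply PSeries_ext. intros [|k]; unfold PSm, PS_derive, PS_incr_1; simpl.
  - exact (Rmult_0_l _).
  - reflexivity.
Qed.

Lemma CV_radius_PSm a : CV_radius (PSm a) = CV_radius a.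
Proof.
  rewrite <- (CV_radius_derive a), <- (CV_radius_incr_1 (PS_derive a)). apply CV_radius_ext.
  intros [|k]; unfold PSm, PS_derive, PS_incr_1; simpl.
  - exact (Rmult_0_l _).
  - reflexivity.
Qed.

Lemma Zterm_eq g x k : Zterm g x k = cc g k * x ^ k.
Proof. unfold Zterm, cc, Rdiv. ring. Qed.

Lemma adm_ex g x : admissible g x -> ex_pseries (cc g) x /\ ex_pseries (PSm (cc g)) x.
Proof.
  intros [H0 [[l1 H1] [l2 H2]]]. split.
  - apply (ps_ex _ _ l1). refine (inf_sum_ext _ _ _ _ H1). intros k; apply Zterm_eq.
  - apply (ps_ex _ _ l2). refine (inf_sum_ext _ _ _ _ H2). intros k; rewrite Zterm_eq; unfold PSm; ring.
Qed.

Lemma Z_eq g x : ex_pseries (cc g) x -> Z g x = Zf g x.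
Proof.
  intros H. unfold Z. apply Series_eq. refine (inf_sum_ext _ _ _ _ (ps_sum _ _ H)).
  intros k; rewrite Zterm_eq; ring.
Qed.

Lemma M1_eq g x : ex_pseries (PSm (cc g)) x -> M1 g x = M1f g x.
Proof.
  intros H. unfold M1. apply Series_eq. refine (inf_sum_ext _ _ _ _ (ps_sum _ _ H)).
  intros k; rewrite Zterm_eq; unfold PSm; ring.
Qed.

Lemma dens_eq g x : admissible g x -> dens g x = Df g x.
Proof.
  intros H. destruct (adm_ex g x H). unfold dens, Df. rewrite Z_eq, M1_eq; auto.
Qed.

Lemma scal_pow x (c : R) n : scal (pow_n x n) c = c * x ^ n.
Proof. rewrite pow_n_pow. unfold scal; simpl. unfold mult; simpl. ring. Qed.

Lemma adm_radius g (hgpos : forall k, (0 < k)%nat -> 0 < g k) x :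
  admissible g x -> Rbar_le x (CV_radius (cc g)).
Proof.
  intros H. destruct (adm_ex g x H) as [H1 _]. destruct H as [H0 _].
  unfold CV_radius. destruct (Lub_Rbar_correct (CV_disk (cc g))) as [Hub _].
  apply Hub. unfold CV_disk.
  destruct H1 as [l Hl]. exists l. refine (is_series_ext _ _ _ _ Hl).
  intros k. rewrite scal_pow. rewrite Rabs_pos_eq; auto.
  apply Rmult_le_pos; [left; apply cc_pos; auto|apply pow_le; auto].
Qed.

Lemma inf_sum_lin u v lu lv a b : infinite_sum u lu -> infinite_sum v lv ->
  infinite_sum (fun k => a * u k + b * v k) (a * lu + b * lv).
Proof.
  intros Hu Hv. apply is_series_Reals. apply is_series_Reals in Hu, Hv.
  apply (is_series_plus _ _ _ _ (is_series_scal_l a _ _ Hu) (is_series_scal_l b _ _ Hv)).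
Qed.

Lemma inf_sum_scal u lu a : infinite_sum u lu -> infinite_sum (fun k => a * u k) (a * lu).
Proof.
  intros Hu. apply is_series_Reals. apply is_series_Reals in Hu.
  apply (is_series_scal_l a _ _ Hu).
Qed.

Lemma ps_lb u l N : (forall k, 0 <= u k) -> infinite_sum u l -> sum_f_R0 u N <= l.
Proof. intros H1 H2. apply sum_incr; auto. Qed.

Definition RR g := CV_radius (cc g).

Lemma lt_R_le g x y : 0 <= x -> x <= y -> Rbar_lt y (RR g) -> Rbar_lt (Rabs x) (RR g).
Proof.
  intros H0 H1 H2. rewrite Rabs_pos_eq by auto. apply (Rbar_le_lt_trans x y); [exact H1|exact H2].
Qed.

Lemma ex_cc g x : 0 <= x -> Rbar_lt x (RR g) -> ex_pseries (cc g) x.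
Proof. intros H0 H. apply CV_radius_inside. apply (lt_R_le g x x); auto; lra. Qed.

Lemma ex_PSm g x : 0 <= x -> Rbar_lt x (RR g) -> ex_pseries (PSm (cc g)) x.
Proof. intros H0 H. apply CV_radius_inside. rewrite CV_radius_PSm. apply (lt_R_le g x x); auto; lra. Qed.

Lemma ex_PSm2 g x : 0 <= x -> Rbar_lt x (RR g) -> ex_pseries (PSm (PSm (cc g))) x.
Proof. intros H0 H. apply CV_radius_inside. rewrite !CV_radius_PSm. apply (lt_R_le g x x); auto; lra. Qed.

Lemma adm_inside g x : 0 <= x -> Rbar_lt x (RR g) -> admissible g x.
Proof.
  intros H0 H. split; auto. split.
  - exists (PSeries (cc g) x). refine (inf_sum_ext _ _ _ _ (ps_sum _ _ (ex_cc g x H0 H))).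
    intros k; rewrite Zterm_eq; ring.
  - exists (PSeries (PSm (cc g)) x). refine (inf_sum_ext _ _ _ _ (ps_sum _ _ (ex_PSm g x H0 H))).
    intros k; rewrite Zterm_eq; unfold PSm; ring.
Qed.

Lemma Zf_ge1 g (hgpos : forall k, (0 < k)%nat -> 0 < g k) x : 0 <= x -> ex_pseries (cc g) x -> 1 <= Zf g x.
Proof.
  intros H0 H. unfold Zf. pose proof (ps_sum _ _ H) as S.
  assert (L : sum_f_R0 (fun n => cc g n * x ^ n) 0 <= PSeries (cc g) x).
  { apply ps_lb; auto. intros k; apply Rmult_le_pos; [left; apply cc_pos; auto|apply pow_le; auto]. }
  simpl in L. rewrite cc_0 in L. lra.
Qed.

Lemma dZ g x : 0 <= x -> Rbar_lt x (RR g) -> derivable_pt_lim (Zf g) x (PSeries (PS_derive (cc g)) x).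
Proof.
  intros H0 H. apply is_derive_Reals. apply is_derive_PSeries. apply (lt_R_le g x x); auto; lra.
Qed.

Lemma dM1 g x : 0 <= x -> Rbar_lt x (RR g) -> derivable_pt_lim (M1f g) x (PSeries (PS_derive (PSm (cc g))) x).
Proof.
  intros H0 H. apply is_derive_Reals. apply is_derive_PSeries. rewrite CV_radius_PSm. apply (lt_R_le g x x); auto; lra.
Qed.

Lemma dD g (hgpos : forall k, (0 < k)%nat -> 0 < g k) x : 0 <= x -> Rbar_lt x (RR g) -> derivable_pt_lim (Df g) x (Dd g x).
Proof.
  intros H0 H. assert (E : Df g = (M1f g / Zf g)%F) by reflexivity. rewrite E.
  unfold Dd. apply derivable_pt_lim_div; [apply dM1|apply dZ|]; auto.
  pose proof (Zf_ge1 g hgpos x H0 (ex_cc g x H0 H)). lra.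
Qed.

Lemma var_pos g (hgpos : forall k, (0 < k)%nat -> 0 < g k) x : 0 < x -> Rbar_lt x (RR g) ->
  0 < M2f g x * Zf g x - (M1f g x)².
Proof.
  intros H0 H.
  pose proof (ps_sum _ _ (ex_cc g x (Rlt_le _ _ H0) H)) as Su.
  pose proof (ps_sum _ _ (ex_PSm g x (Rlt_le _ _ H0) H)) as Sv.
  pose proof (ps_sum _ _ (ex_PSm2 g x (Rlt_le _ _ H0) H)) as Sw.
  pose proof (Zf_ge1 g hgpos x (Rlt_le _ _ H0) (ex_cc g x (Rlt_le _ _ H0) H)) as Z1.
  fold (Zf g x) in Su. fold (M1f g x) in Sv. fold (M2f g x) in Sw.
  set (Z0 := Zf g x) in *. set (m1 := M1f g x) in *. set (m2 := M2f g x) in *.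
  set (mu := m1 / Z0).
  pose proof (inf_sum_lin _ _ _ _ 1 (-2 * mu) Sw Sv) as S1.
  pose proof (inf_sum_lin _ _ _ _ 1 (mu * mu) S1 Su) as S2.
  assert (Hh : forall k, 0 <= (1 * (1 * (PSm (PSm (cc g)) k * x ^ k) + -2 * mu * (PSm (cc g) k * x ^ k)) + mu * mu * (cc g k * x ^ k))).
  { intros k. unfold PSm.
    replace (1 * (1 * (INR k * (INR k * cc g k) * x ^ k) + -2 * mu * (INR k * cc g k * x ^ k)) + mu * mu * (cc g k * x ^ k))
      with ((INR k - mu) * (INR k - mu) * (cc g k * x ^ k)) by ring.
    apply Rmult_le_pos; [apply Rle_0_sqr|]. apply Rmult_le_pos; [left; apply cc_pos; auto|apply pow_le; lra]. }
  pose proof (ps_lb _ _ 1 Hh S2) as L. simpl in L. unfold PSm in L. rewrite cc_0 in L.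
  pose proof (cc_pos g hgpos 1).
  assert (P : 0 < 1 * (1 * m2 + -2 * mu * m1) + mu * mu * Z0).
  { simpl in L. assert (0 < cc g 1 * x) by (apply Rmult_lt_0_compat; auto).
    assert (T: 0 < mu * mu + (1 - mu) * (1 - mu) * (cc g 1 * x)).
    { destruct (Req_dec mu 0) as [E|E]; [rewrite E; nra|].
      assert (0 < mu * mu) by (apply Rsqr_pos_lt in E; unfold Rsqr in E; lra). assert (0 <= (1-mu)*(1-mu)*(cc g 1 * x)) by (apply Rmult_le_pos; [apply Rle_0_sqr|lra]); lra. }
    eapply Rlt_le_trans; [exact T|]. eapply Rle_trans; [|exact L]. right. simpl. ring. }
  unfold mu in P. unfold Rsqr.
  replace (m2 * Z0 - m1 * m1) with (Z0 * (1 * (1 * m2 + -2 * (m1 / Z0) * m1) + m1 / Z0 * (m1 / Z0) * Z0)) by (field; lra).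
  apply Rmult_lt_0_compat; lra.
Qed.

Lemma Dd_mul g x : Zf g x <> 0 ->
  x * Dd g x = (M2f g x * Zf g x - (M1f g x)²) / (Zf g x)².
Proof.
  intros HZ. unfold Dd, M2f, M1f. rewrite (PSeries_PSm (PSm (cc g))).
  rewrite (PSeries_PSm (cc g)). unfold Rsqr. field. auto.
Qed.

Lemma Dd_pos g (hgpos : forall k, (0 < k)%nat -> 0 < g k) x : 0 < x -> Rbar_lt x (RR g) -> 0 < Dd g x.
Proof.
  intros H0 H.
  pose proof (Zf_ge1 g hgpos x (Rlt_le _ _ H0) (ex_cc g x (Rlt_le _ _ H0) H)) as Z1.
  pose proof (var_pos g hgpos x H0 H) as V.
  pose proof (Dd_mul g x ltac:(lra)) as E.
  assert (0 < x * Dd g x).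
  { rewrite E. apply Rdiv_lt_0_compat; auto. unfold Rsqr; nra. }
  destruct (Rlt_or_le 0 (Dd g x)); auto. nra.
Qed.

Lemma mono_in g (hgpos : forall k, (0 < k)%nat -> 0 < g k) x y : 0 <= x -> x < y -> Rbar_lt y (RR g) -> Df g x < Df g y.
Proof.
  intros H0 H1 H2.
  destruct (MVT_cor2 (Df g) (Dd g) x y H1) as [c [E Hc]].
  { intros c Hc. apply dD; auto; [lra|]. apply (Rbar_le_lt_trans c y); auto. simpl; lra. }
  assert (0 < Dd g c).
  { apply Dd_pos; auto; [lra|]. apply (Rbar_le_lt_trans c y); auto. simpl; lra. }
  assert (0 < Dd g c * (y - x)) by (apply Rmult_lt_0_compat; lra). lra.
Qed.

Lemma ballR (x y : R) (e : posreal) : ball x e y <-> Rabs (y - x) < e.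
Proof. unfold ball; simpl. unfold AbsRing_ball. unfold abs, minus, plus, opp; simpl. unfold Rminus. tauto. Qed.

Lemma M1f_ge0 g (hgpos : forall k, (0 < k)%nat -> 0 < g k) x : 0 <= x -> ex_pseries (PSm (cc g)) x -> 0 <= M1f g x.
Proof.
  intros H0 H. unfold M1f. pose proof (ps_sum _ _ H) as S.
  assert (L : sum_f_R0 (fun n => PSm (cc g) n * x ^ n) 0 <= PSeries (PSm (cc g)) x).
  { apply ps_lb; auto. intros k; unfold PSm; apply Rmult_le_pos; [|apply pow_le; auto].
    apply Rmult_le_pos; [apply pos_INR|left; apply cc_pos; auto]. }
  assert (E0 : sum_f_R0 (fun n => PSm (cc g) n * x ^ n) 0 = 0) by (simpl; unfold PSm; simpl; ring). lra.
Qed.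

Lemma mono_bd g (hgpos : forall k, (0 < k)%nat -> 0 < g k) r x :
  RR g = Finite r -> admissible g r -> 0 <= x -> x < r -> Df g x < Df g r.
Proof.
  intros HR Hadm H0 H1.
  destruct (adm_ex g r Hadm) as [Ec Em].
  assert (A1 : filterlim (PSeries (cc g)) (at_left r) (locally (PSeries (cc g) r))).
  { pose proof (Abel (cc g)) as A. unfold RR in HR. rewrite HR in A. apply A; simpl; auto; lra. }
  assert (A2 : filterlim (PSeries (PSm (cc g))) (at_left r) (locally (PSeries (PSm (cc g)) r))).
  { pose proof (Abel (PSm (cc g))) as A. unfold RR in HR. rewrite CV_radius_PSm, HR in A. apply A; simpl; auto; lra. }
  set (y := (x + r) / 2).
  assert (Hy : Rbar_lt y (RR g)) by (rewrite HR; simpl; unfold y; lra).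
  assert (Hxy : Df g x < Df g y) by (apply mono_in; auto; unfold y; lra).
  assert (Hy0 : 0 <= y) by (unfold y; lra).
  pose proof (Zf_ge1 g hgpos y Hy0 (ex_cc g y Hy0 Hy)) as Zy1.
  pose proof (M1f_ge0 g hgpos y Hy0 (ex_PSm g y Hy0 Hy)) as My0.
  pose proof (Zf_ge1 g hgpos r ltac:(lra) Ec) as Zr1.
  set (Zy := Zf g y) in *. set (My := M1f g y) in *.
  set (hr := M1f g r * Zy - My * Zf g r).
  destruct (Rlt_or_le hr 0) as [Hh|Hh].
  2:{ assert (Df g y <= Df g r).
      { unfold Df. fold Zy My. apply (Rmult_le_reg_r (Zy * Zf g r)); [nra|].
        replace (My / Zy * (Zy * Zf g r)) with (My * Zf g r) by (field; lra).
        replace (M1f g r / Zf g r * (Zy * Zf g r)) with (M1f g r * Zy) by (field; lra). unfold hr in Hh. lra. }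
      lra. }
  exfalso.
  assert (Heps : 0 < - hr / (Zy + My + 1)) by (apply Rdiv_lt_0_compat; lra).
  set (eps := mkposreal _ Heps).
  apply filterlim_locally with (eps := eps) in A1.
  apply filterlim_locally with (eps := eps) in A2.
  destruct (filter_and _ _ A1 A2) as [d Hd].
  set (z := Rmax y (r - d / 2)).
  assert (Hz1 : y <= z) by apply Rmax_l.
  assert (Hz2 : z < r) by (unfold z; apply Rmax_lub_lt; [unfold y; lra|destruct d; simpl; lra]).
  assert (Hz3 : ball r d z).
  { apply ballR. unfold z. destruct d as [d dp]; simpl.
    apply Rmax_case_strong; intros; rewrite Rabs_left; unfold y in *; lra. }
  destruct (Hd z Hz3 Hz2) as [B1 B2]. apply ballR in B1, B2. simpl in B1, B2.
  assert (Hz0 : 0 <= z) by lra.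
  assert (HzR : Rbar_lt z (RR g)) by (rewrite HR; simpl; lra).
  pose proof (Zf_ge1 g hgpos z Hz0 (ex_cc g z Hz0 HzR)) as Zz1.
  assert (Hmono : Df g y <= Df g z).
  { destruct (Req_dec y z) as [E|E]; [rewrite E; lra|]. left; apply mono_in; auto; lra. }
  unfold Df in Hmono. fold Zy My in Hmono.
  assert (Hhz : 0 <= M1f g z * Zy - My * Zf g z).
  { apply (Rmult_le_compat_r (Zy * Zf g z)) in Hmono; [|nra].
    replace (My / Zy * (Zy * Zf g z)) with (My * Zf g z) in Hmono by (field; lra).
    replace (M1f g z / Zf g z * (Zy * Zf g z)) with (M1f g z * Zy) in Hmono by (field; lra). lra. }
  clearbody Zy My. unfold Df, M1f, Zf in *.
  set (e := - hr / (Zy + My + 1)) in *.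
  assert (Ee : e * (Zy + My + 1) = - hr) by (unfold e; field; lra).
  apply Rabs_def2 in B1, B2. destruct B1 as [B1 B1'], B2 as [B2 B2'].
  unfold minus, plus, opp, eps in B1, B1', B2, B2'; simpl in B1, B1', B2, B2'.
  set (A := PSeries (PSm (cc g)) z) in *. set (B := PSeries (cc g) z) in *.
  set (Mr := PSeries (PSm (cc g)) r) in *. set (Zr := PSeries (cc g) r) in *.
  assert (Hhr : hr = Mr * Zy - My * Zr) by reflexivity.
  clearbody hr.
  assert (T1 : (A - Mr) * Zy < e * Zy) by (apply Rmult_lt_compat_r; lra).
  assert (T2 : - e * My <= (B - Zr) * My) by (apply Rmult_le_compat_r; lra).
  assert (T3 : A * Zy - My * B = (A - Mr) * Zy - (B - Zr) * My + (Mr * Zy - My * Zr)) by ring.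
  lra.
Qed.

Lemma mono_adm g (hgpos : forall k, (0 < k)%nat -> 0 < g k) x y :
  admissible g x -> admissible g y -> x < y -> Df g x < Df g y.
Proof.
  intros Hx Hy Hxy. pose proof (adm_radius g hgpos y Hy) as Ry.
  destruct Hx as [Hx0 _].
  destruct (RR g) eqn:HR.
  - assert (HR' := HR). unfold RR in HR'. rewrite HR' in Ry. simpl in Ry. destruct Ry as [Ry|Ry].
    + apply mono_in; auto. rewrite HR. exact Ry.
    + subst. apply (mono_bd g hgpos r); auto.
  - apply mono_in; auto. rewrite HR. exact I.
  - unfold RR in HR. rewrite HR in Ry. destruct Ry.
Qed.

Lemma lt_of_Df g (hgpos : forall k, (0 < k)%nat -> 0 < g k) x y :
  admissible g x -> admissible g y -> Df g x < Df g y -> x < y.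
Proof.
  intros Hx Hy H. destruct (Rlt_or_le x y) as [L|L]; auto.
  destruct (Req_dec x y) as [E|E]; [subst; lra|].
  assert (Df g y < Df g x) by (apply mono_adm; auto; lra). lra.
Qed.

Lemma phi_of_spec g r : in_dom g r -> admissible g (phi_of g r) /\ dens g (phi_of g r) = r.
Proof.
  intros [p Hp]. unfold phi_of.
  exact (epsilon_spec (inhabits 0) (fun phi => admissible g phi /\ dens g phi = r) (ex_intro _ p Hp)).
Qed.

Lemma phi_of_eq g (hgpos : forall k, (0 < k)%nat -> 0 < g k) x :
  admissible g x -> phi_of g (Df g x) = x.
Proof.
  intros Hx. destruct (phi_of_spec g (Df g x)) as [H1 H2].
  { exists x; split; auto. apply dens_eq; auto. }
  rewrite dens_eq in H2 by auto.
  destruct (Rlt_or_le (phi_of g (Df g x)) x) as [L|L].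
  - pose proof (mono_adm g hgpos _ _ H1 Hx L). lra.
  - destruct L as [L|L]; auto. pose proof (mono_adm g hgpos _ _ Hx H1 L). lra.
Qed.

Lemma A_main g (hgpos : forall k, (0 < k)%nat -> 0 < g k) rho :
  0 < rho -> interior_dom g rho ->
  admissible g (phi_of g rho) /\ Df g (phi_of g rho) = rho /\ 0 < phi_of g rho /\
  Rbar_lt (phi_of g rho) (RR g) /\ 0 < Dd g (phi_of g rho) /\
  derivable_pt_lim (phi_of g) rho (/ Dd g (phi_of g rho)).
Proof.
  intros Hr [eps [Heps Hin]].
  assert (Sp : forall r, Rabs (r - rho) < eps -> admissible g (phi_of g r) /\ Df g (phi_of g r) = r).
  { intros r Hr'. destruct (phi_of_spec g r (Hin r Hr')) as [A B]. split; auto. rewrite <- dens_eq; auto. }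
  destruct (Sp (rho - eps/2)) as [Alo Dlo]. { rewrite Rabs_left; lra. }
  destruct (Sp (rho + eps/2)) as [Ahi Dhi]. { rewrite Rabs_right; lra. }
  destruct (Sp (rho + 3*eps/4)) as [Ahi2 Dhi2]. { rewrite Rabs_right; lra. }
  destruct (Sp rho) as [A0 D0]. { rewrite Rminus_diag, Rabs_R0; lra. }
  set (plo := phi_of g (rho - eps/2)) in *. set (phi := phi_of g (rho + eps/2)) in *.
  set (phi2 := phi_of g (rho + 3*eps/4)) in *. set (p0 := phi_of g rho) in *.
  assert (L1 : plo < p0) by (apply (lt_of_Df g hgpos); auto; lra).
  assert (L2 : p0 < phi) by (apply (lt_of_Df g hgpos); auto; lra).
  assert (L3 : phi < phi2) by (apply (lt_of_Df g hgpos); auto; lra).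
  assert (Rhi : Rbar_lt phi (RR g)).
  { apply (Rbar_lt_le_trans phi phi2); [exact L3|]. apply adm_radius; auto. }
  assert (Plo : 0 <= plo) by (destruct Alo; auto).
  assert (R0 : Rbar_lt p0 (RR g)) by (apply (Rbar_le_lt_trans p0 phi); [simpl; lra|auto]).
  assert (Dpos : 0 < Dd g p0) by (apply Dd_pos; auto; lra).
  assert (Inside : forall a, plo <= a <= phi -> 0 <= a /\ Rbar_lt a (RR g)).
  { intros a Ha. split; [lra|]. apply (Rbar_le_lt_trans a phi); [simpl; lra|auto]. }
  split; [auto|]. split; [auto|]. split; [lra|]. split; [auto|]. split; [auto|].
  assert (Prf : forall a, phi_of g (rho - eps/2) <= a <= phi_of g (rho + eps/2) -> derivable_pt (Df g) a).
  { intros a Ha. destruct (Inside a Ha). exists (Dd g a). apply dD; auto. }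
  assert (Cont : continuity_pt (phi_of g) rho).
  { apply (Ranalysis5.continuity_pt_recip_prelim (Df g) (phi_of g) plo phi); try lra.
    - intros x y Hx Hxy Hy. apply mono_in; auto; [lra|]. apply Inside; lra.
    - intros x Hx. unfold comp, id. apply phi_of_eq; auto. apply adm_inside; apply Inside; lra.
    - intros a Ha. destruct (Inside a Ha). apply derivable_continuous_pt. exists (Dd g a). apply dD; auto. }
  assert (Incr : phi_of g (rho - eps/2) <= phi_of g rho <= phi_of g (rho + eps/2)) by (fold plo phi p0; lra).
  pose proof (Ranalysis5.derivable_pt_lim_recip_interv (Df g) (phi_of g) (rho - eps/2) (rho + eps/2) rho Prf Cont
     ltac:(lra) ltac:(lra) Incr) as H.
  assert (Dv : derive_pt (Df g) (phi_of g rho) (Prf (phi_of g rho) Incr) = Dd g p0).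
  { apply derive_pt_eq_0. apply dD; auto; lra. }
  rewrite Dv in H. unfold Rdiv in H. rewrite Rmult_1_l in H. apply H.
  - intros x0 Hx0. unfold comp, id. destruct (Sp x0) as [_ E]; auto.
    apply Rabs_def1; lra.
  - lra.
Qed.

Lemma nu_eq g r : admissible g (phi_of g r) ->
  forall m, nu g r m = cc g m * (phi_of g r) ^ m / Zf g (phi_of g r).
Proof.
  intros H m. destruct (adm_ex g _ H) as [E1 E2]. unfold nu. rewrite Zterm_eq, Z_eq; auto.
Qed.

Lemma inf_sum_eq_l u l l' : infinite_sum u l -> l = l' -> infinite_sum u l'.
Proof. intros H E; subst; auto. Qed.

Lemma inf_sum_shift u l : u 0%nat = 0 -> infinite_sum (fun k => u (S k)) l -> infinite_sum u l.
Proof.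
  intros H0 H eps Heps. destruct (H eps Heps) as [N HN]. exists (S N). intros n Hn.
  destruct n as [|n]; [lia|]. rewrite (decomp_sum u (S n)) by lia. simpl pred. rewrite H0, Rplus_0_l.
  apply HN. lia.
Qed.

Lemma S_m g (hgpos : forall k, (0 < k)%nat -> 0 < g k) r : in_dom g r ->
  infinite_sum (fun m => INR m * nu g r m) r.
Proof.
  intros Hd. destruct (phi_of_spec g r Hd) as [Ha Hr].
  destruct (adm_ex g _ Ha) as [E1 E2]. destruct Ha as [H0 Ha'].
  pose proof (Zf_ge1 g hgpos _ H0 E1).
  pose proof (inf_sum_scal _ _ (/ Zf g (phi_of g r)) (ps_sum _ _ E2)) as SS.
  rewrite dens_eq in Hr by (split; auto). unfold Df, M1f in Hr.
  assert (NE : forall m, nu g r m = cc g m * (phi_of g r) ^ m / Zf g (phi_of g r)) by (apply nu_eq; split; auto).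
  set (p := phi_of g r) in *. clearbody p.
  apply (inf_sum_eq_l _ (/ Zf g p * PSeries (PSm (cc g)) p)); [|rewrite <- Hr; field; lra].
  refine (inf_sum_ext _ _ _ _ SS). intros m. rewrite NE. unfold PSm. field. lra.
Qed.

Lemma S_g g (hg0 : g O = 0) (hgpos : forall k, (0 < k)%nat -> 0 < g k) r : in_dom g r ->
  infinite_sum (fun m => g m * nu g r m) (phi_of g r).
Proof.
  intros Hd. destruct (phi_of_spec g r Hd) as [Ha Hr].
  destruct (adm_ex g _ Ha) as [E1 E2]. destruct Ha as [H0 Ha'].
  pose proof (Zf_ge1 g hgpos _ H0 E1).
  set (p := phi_of g r) in *.
  pose proof (inf_sum_scal _ _ (p / Zf g p) (ps_sum _ _ E1)) as SS.
  apply inf_sum_shift; [rewrite hg0; ring|].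
  apply (inf_sum_eq_l _ (p / Zf g p * PSeries (cc g) p)); [|unfold Zf in *; field; lra].
  refine (inf_sum_ext _ _ _ _ SS). intros k. unfold Rdiv at 1.
  rewrite nu_eq by (split; auto). fold p.
  unfold cc. simpl gfact. pose proof (gfact_pos g hgpos k). pose proof (hgpos (S k) ltac:(lia)).
  simpl pow. field. split; lra.
Qed.

Lemma S_2 g (hgpos : forall k, (0 < k)%nat -> 0 < g k) r : in_dom g r ->
  Rbar_lt (phi_of g r) (RR g) ->
  infinite_sum (fun m => INR m ^ 2 * nu g r m) (M2f g (phi_of g r) / Zf g (phi_of g r)).
Proof.
  intros Hd HR. destruct (phi_of_spec g r Hd) as [Ha Hr].
  destruct (adm_ex g _ Ha) as [E1 E2]. destruct Ha as [H0 Ha'].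
  pose proof (Zf_ge1 g hgpos _ H0 E1).
  pose proof (inf_sum_scal _ _ (/ Zf g (phi_of g r)) (ps_sum _ _ (ex_PSm2 g _ H0 HR))) as SS.
  replace (M2f g (phi_of g r) / Zf g (phi_of g r)) with (/ Zf g (phi_of g r) * PSeries (PSm (PSm (cc g))) (phi_of g r)) by (unfold M2f; field; lra).
  refine (inf_sum_ext _ _ _ _ SS). intros m. rewrite nu_eq by (split; auto). unfold PSm. field. lra.
Qed.

Lemma GT g (hg0 : g O = 0) (hgpos : forall k, (0 < k)%nat -> 0 < g k) n a i :
  vsum a n <> 0 -> in_dom g (vsum a n) -> (i < n)%nat ->
  gtilde g n i a = a i / vsum a n * phi_of g (vsum a n).
Proof.
  intros Hr Hd Hi. unfold gtilde, Ea. apply Series_eq.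
  refine (inf_sum_ext _ _ _ _ (inf_sum_scal _ _ (a i / vsum a n) (S_g g hg0 hgpos _ Hd))).
  intros m. symmetry. apply T_g; auto.
Qed.

Lemma EA1 g (hgpos : forall k, (0 < k)%nat -> 0 < g k) n a i :
  vsum a n <> 0 -> in_dom g (vsum a n) -> (i < n)%nat ->
  Ea g n a (fun k => coord k i) = a i.
Proof.
  intros Hr Hd Hi. unfold Ea. apply Series_eq.
  apply (inf_sum_eq_l _ (a i / vsum a n * vsum a n)); [|field; auto].
  refine (inf_sum_ext _ _ _ _ (inf_sum_scal _ _ (a i / vsum a n) (S_m g hgpos _ Hd))).
  intros m. symmetry. apply T_1; auto.
Qed.

Lemma EA2 g (hgpos : forall k, (0 < k)%nat -> 0 < g k) n a i j E2 :
  vsum a n <> 0 -> in_dom g (vsum a n) -> (i < n)%nat -> (j < n)%nat ->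
  infinite_sum (fun m => INR m ^ 2 * nu g (vsum a n) m) E2 ->
  Ea g n a (fun k => coord k i * coord k j) =
  a i / vsum a n * (a j / vsum a n) * (E2 - vsum a n) + (if Nat.eqb i j then a i else 0).
Proof.
  intros Hr Hd Hi Hj H2. unfold Ea. apply Series_eq.
  set (al := a i / vsum a n * (a j / vsum a n)).
  set (be := - al + (if Nat.eqb i j then a i / vsum a n else 0)).
  apply (inf_sum_eq_l _ (al * E2 + be * vsum a n)).
  2:{ unfold be. destruct (Nat.eqb i j); field; auto. }
  refine (inf_sum_ext _ _ _ _ (inf_sum_lin _ _ _ _ al be H2 (S_m g hgpos _ Hd))).
  intros m. symmetry. rewrite T_2 by auto. unfold be, al. destruct (Nat.eqb i j); ring.
Qed.

Lemma Gamma_eq g (hgpos : forall k, (0 < k)%nat -> 0 < g k) n a i j E2 :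
  vsum a n <> 0 -> in_dom g (vsum a n) -> (i < n)%nat -> (j < n)%nat ->
  infinite_sum (fun m => INR m ^ 2 * nu g (vsum a n) m) E2 ->
  Gamma g n a i j =
  a i / vsum a n * (a j / vsum a n) * (E2 - vsum a n - (vsum a n) ^ 2) + (if Nat.eqb i j then a i else 0).
Proof.
  intros Hr Hd Hi Hj H2. unfold Gamma. rewrite EA2 with (E2 := E2), !EA1 by auto.
  destruct (Nat.eqb i j); field; auto.
Qed.

Lemma sigma2_eq g (hgpos : forall k, (0 < k)%nat -> 0 < g k) r E2 :
  in_dom g r -> infinite_sum (fun m => INR m ^ 2 * nu g r m) E2 -> sigma2 g r = E2 - r ^ 2.
Proof.
  intros Hd H2. unfold sigma2. rewrite (Series_eq _ _ H2), (Series_eq _ _ (S_m g hgpos r Hd)). reflexivity.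
Qed.

Lemma vsum_ext_lt f f' n : (forall i, (i < n)%nat -> f i = f' i) -> vsum f n = vsum f' n.
Proof. intros H; induction n; simpl; auto. rewrite IHn, H; auto. Qed.

Lemma vsum_upd a j t n : (j < n)%nat -> vsum (upd a j t) n = vsum a n + (t - a j).
Proof.
  induction n as [|n IH]; intros Hj; [lia|]. simpl.
  destruct (Nat.eq_dec j n) as [E|E].
  - subst. rewrite (vsum_ext_lt (upd a n t) a n).
    + unfold upd. rewrite Nat.eqb_refl. ring.
    + intros i Hi. unfold upd. destruct (Nat.eqb_spec i n); [lia|auto].
  - rewrite IH by lia. unfold upd. destruct (Nat.eqb_spec n j); [lia|]. ring.
Qed.

Lemma dlim_gen (u psi : R -> R) rho c du ui dpsi psi0 :
  derivable_pt_lim u c du -> u c = ui ->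
  derivable_pt_lim psi rho dpsi -> psi rho = psi0 -> rho <> 0 ->
  derivable_pt_lim (fun t => u t / (rho + (t - c)) * psi (rho + (t - c))) c
    ((du * rho - ui) / rho ^ 2 * psi0 + ui / rho * dpsi).
Proof.
  intros Hu Eu Hp Ep Hr.
  assert (Hrr : derivable_pt_lim (fun t => rho + (t - c)) c 1).
  { apply is_derive_Reals. auto_derive; [auto|ring]. }
  assert (Hc : derivable_pt_lim (comp psi (fun t => rho + (t - c))) c (dpsi * 1)).
  { apply derivable_pt_lim_comp; auto. replace (rho + (c - c)) with rho by ring. auto. }
  assert (Hnz : (fun t => rho + (t - c)) c <> 0) by (simpl; replace (rho + (c - c)) with rho by ring; auto).
  pose proof (derivable_pt_lim_div u (fun t => rho + (t - c)) c du 1 Hu Hrr Hnz) as Hq.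
  pose proof (derivable_pt_lim_mult _ _ _ _ _ Hq Hc) as H.
  unfold comp, div_fct, mult_fct in H. simpl in H.
  replace (rho + (c - c)) with rho in H by ring. rewrite Eu, Ep in H.
  replace ((du * rho - ui) / rho ^ 2 * psi0 + ui / rho * dpsi)
    with ((du * rho - 1 * ui) / rho² * psi0 + ui / rho * (dpsi * 1)) by (unfold Rsqr; field; auto).
  exact H.
Qed.

Lemma DP g (hg0 : g O = 0) (hgpos : forall k, (0 < k)%nat -> 0 < g k) n a0 i j :
  0 < vsum a0 n -> interior_dom g (vsum a0 n) -> (i < n)%nat -> (j < n)%nat ->
  derivable_pt_lim (fun t => gtilde g n i (upd a0 j t)) (a0 j)
    (((if Nat.eqb i j then 1 else 0) * vsum a0 n - a0 i) / (vsum a0 n) ^ 2 * phi_of g (vsum a0 n)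
     + a0 i / vsum a0 n * / Dd g (phi_of g (vsum a0 n))).
Proof.
  intros Hr Hint Hi Hj.
  destruct (A_main g hgpos _ Hr Hint) as [_ [_ [_ [_ [_ Hd]]]]].
  destruct Hint as [eps [Heps Hin]].
  set (rho := vsum a0 n) in *.
  apply is_derive_Reals.
  apply (is_derive_ext_loc (fun t => (if Nat.eqb i j then t else a0 i) / (rho + (t - a0 j)) * phi_of g (rho + (t - a0 j)))).
  - assert (Hd0 : 0 < Rmin eps rho) by (apply Rmin_glb_lt; auto).
    exists (mkposreal _ Hd0). intros t Ht. apply ballR in Ht. simpl in Ht.
    assert (Ht1 : Rabs (t - a0 j) < eps) by (eapply Rlt_le_trans; [exact Ht|apply Rmin_l]).
    assert (Ht2 : Rabs (t - a0 j) < rho) by (eapply Rlt_le_trans; [exact Ht|apply Rmin_r]).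
    apply Rabs_def2 in Ht2. destruct Ht2.
    rewrite GT; auto.
    + rewrite vsum_upd by auto. fold rho. unfold upd. reflexivity.
    + rewrite vsum_upd by auto. fold rho. lra.
    + rewrite vsum_upd by auto. fold rho. apply Hin. replace (rho + (t - a0 j) - rho) with (t - a0 j) by ring. auto.
  - apply is_derive_Reals. apply dlim_gen; auto; try lra.
    + destruct (Nat.eqb i j); [apply derivable_pt_lim_id|apply derivable_pt_lim_const].
    + destruct (Nat.eqb_spec i j); subst; auto.
Qed.

Lemma vsum_pos a n : (forall i, (i < n)%nat -> 0 < a i) -> (0 < n)%nat -> 0 < vsum a n.
Proof.
  induction n as [|n IH]; intros H Hn; [lia|]. change (vsum a (S n)) with (vsum a n + a n).
  pose proof (H n ltac:(lia)).
  destruct n as [|n].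
  - simpl. lra.
  - assert (0 < vsum a (S n)) by (apply IH; auto; lia). lra.
Qed.

Lemma dlim_eq f x l l' : derivable_pt_lim f x l -> l = l' -> derivable_pt_lim f x l'.
Proof. intros H E; subst; auto. Qed.

Theorem proposition7p4 (g : nat -> R)
  (hg0 : g O = 0) (hgpos : forall k, (0 < k)%nat -> 0 < g k)
  (n : nat) (hn : (2 <= n)%nat)
  (a0 : nat -> R) (ha0 : forall i, (i < n)%nat -> 0 < a0 i)
  (hint : interior_dom g (vsum a0 n)) :
  (FC g n a0 <->
     ((forall i j, (i < n)%nat -> (j < n)%nat -> i <> j -> Gamma g n a0 i j = 0) /\
      (forall i j, (i < n)%nat -> (j < n)%nat -> i <> j ->
         gtilde g n i a0 * Gamma g n a0 j j = gtilde g n j a0 * Gamma g n a0 i i)))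
  /\
  (FC g n a0 <->
     derivable_pt_lim (phi_of g) (vsum a0 n) (phi_of g (vsum a0 n) / vsum a0 n))
  /\
  (derivable_pt_lim (phi_of g) (vsum a0 n) (phi_of g (vsum a0 n) / vsum a0 n) <->
     sigma2 g (vsum a0 n) = vsum a0 n).
Proof.
  assert (Hr : 0 < vsum a0 n) by (apply vsum_pos; auto; lia).
  destruct (A_main g hgpos _ Hr hint) as [Adm [DfE [Pphi [Rlt [Ddp Hder]]]]].
  assert (Hdom : in_dom g (vsum a0 n)).
  { destruct hint as [eps [Heps Hin]]. apply Hin. rewrite Rminus_diag, Rabs_R0; auto. }
  pose proof (S_2 g hgpos _ Hdom Rlt) as H2.
  pose proof (sigma2_eq g hgpos _ _ Hdom H2) as Hs.
  pose proof (DP g hg0 hgpos n a0) as Dp.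
  pose proof (GT g hg0 hgpos n a0) as Gt.
  pose proof (Gamma_eq g hgpos n a0) as Ge.
  destruct (adm_ex g _ Adm) as [Ec Em].
  pose proof (Zf_ge1 g hgpos _ (proj1 Adm) Ec) as Z1.
  pose proof (Dd_mul g (phi_of g (vsum a0 n)) ltac:(lra)) as DM.
  set (rho := vsum a0 n) in *. set (p0 := phi_of g rho) in *.
  set (E2 := M2f g p0 / Zf g p0) in *.
  set (s := sigma2 g rho) in *.
  assert (Es : p0 * Dd g p0 = s).
  { rewrite DM, Hs. unfold E2. unfold Df in DfE. rewrite <- DfE. unfold Rsqr. field. lra. }
  assert (Spos : 0 < s) by (rewrite <- Es; apply Rmult_lt_0_compat; auto).
  set (K := / Dd g p0 - p0 / rho).
  assert (KP : K = 0 <-> s = rho).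
  { unfold K. replace (/ Dd g p0) with (p0 / s) by (rewrite <- Es; field; lra).
    split; intros H.
    - assert (E0 : p0 / s = p0 / rho) by lra.
      assert (E : p0 / s * (s * rho) = p0 / rho * (s * rho)) by (rewrite E0; auto).
      replace (p0 / s * (s * rho)) with (p0 * rho) in E by (field; lra).
      replace (p0 / rho * (s * rho)) with (p0 * s) in E by (field; lra).
      apply (Rmult_eq_reg_l p0); lra.
    - rewrite H. field. lra. }
  assert (LV : forall i j, (i < n)%nat -> (j < n)%nat ->
     derivable_pt_lim (fun t => gtilde g n i (upd a0 j t)) (a0 j)
       ((if Nat.eqb i j then 1 else 0) * (p0 / rho) + a0 i / rho * K)).
  { intros i j Hi Hj. eapply dlim_eq; [apply Dp; auto|]. unfold K. fold rho p0. field. lra. }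
  assert (FCP : FC g n a0 <-> s = rho).
  { split.
    - intros [lam [_ H2']]. pose proof (H2' 0%nat 1%nat ltac:(lia) ltac:(lia) ltac:(lia)) as H.
      pose proof (LV 0%nat 1%nat ltac:(lia) ltac:(lia)) as H'. simpl Nat.eqb in H'.
      pose proof (uniqueness_limite _ _ _ _ H H') as U.
      apply KP. pose proof (ha0 0%nat ltac:(lia)).
      assert (0 < a0 0%nat / rho) by (apply Rdiv_lt_0_compat; auto).
      destruct (Req_dec K 0); auto. exfalso.
      assert (a0 0%nat / rho * K <> 0) by (apply Rmult_integral_contrapositive; split; lra). lra.
    - intros H. apply KP in H. exists (p0 / rho). split.
      + intros i Hi. unfold has_partial. eapply dlim_eq; [apply LV; auto|]. rewrite Nat.eqb_refl, H. ring.
      + intros i j Hi Hj Hij. unfold has_partial. eapply dlim_eq; [apply LV; auto|].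
        apply Nat.eqb_neq in Hij. rewrite Hij, H. ring. }
  assert (Hs2 : s = E2 - rho ^ 2) by exact Hs.
  assert (GP : ((forall i j, (i < n)%nat -> (j < n)%nat -> i <> j -> Gamma g n a0 i j = 0) /\
      (forall i j, (i < n)%nat -> (j < n)%nat -> i <> j ->
         gtilde g n i a0 * Gamma g n a0 j j = gtilde g n j a0 * Gamma g n a0 i i)) <-> s = rho).
  { split.
    - intros [H _]. pose proof (H 0%nat 1%nat ltac:(lia) ltac:(lia) ltac:(lia)) as H01.
      rewrite (Ge 0%nat 1%nat E2) in H01 by (auto; try lia; lra). simpl Nat.eqb in H01. fold rho in H01.
      pose proof (ha0 0%nat ltac:(lia)). pose proof (ha0 1%nat ltac:(lia)).
      assert (0 < a0 0%nat / rho * (a0 1%nat / rho)) by (apply Rmult_lt_0_compat; apply Rdiv_lt_0_compat; auto).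
      destruct (Req_dec (E2 - rho - rho ^ 2) 0) as [E|E]; [lra|].
      exfalso. rewrite Rplus_0_r in H01. apply (Rmult_integral_contrapositive _ _ (conj (Rgt_not_eq _ _ H3) E)). exact H01.
    - intros H. split.
      + intros i j Hi Hj Hij. rewrite (Ge i j E2) by (auto; lra). fold rho.
        apply Nat.eqb_neq in Hij. rewrite Hij. assert (E2 - rho - rho ^ 2 = 0) by lra.
        rewrite H0. ring.
      + intros i j Hi Hj Hij. rewrite !(Ge _ _ E2) by (auto; lra). rewrite !Gt by (auto; lra). fold rho p0.
        rewrite !Nat.eqb_refl. assert (E2 - rho - rho ^ 2 = 0) by lra. rewrite H0. field. lra. }
  assert (DPh : derivable_pt_lim (phi_of g) rho (p0 / rho) <-> s = rho).
  { split.
    - intros H. apply KP. unfold K. pose proof (uniqueness_limite _ _ _ _ H Hder). fold p0 in H0. lra.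
    - intros H. apply KP in H. unfold K in H. eapply dlim_eq; [exact Hder|]. fold p0. lra. }
  split; [|split].
  - rewrite FCP, GP. tauto.
  - rewrite FCP, DPh. tauto.
  - rewrite DPh. tauto.
Qed.
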